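(* Let $\nu\ge1$, $d:\mathbb{Z}^\nu\to\mathbb{C}$ bounded, $J=J_0+D$ on $\ell^2(\mathbb{Z}^\nu)$, and let $u\in\ell^2(\mathbb{Z}^\nu)$, $u\ne0$, satisfy $Ju=\lambda u$ for some $\lambda\in\mathbb{C}$. Then for every $j\in\{1,\dots,\nu\}$, $$\sup\{k_j: k\in\operatorname{supp}(u)\}=\infty\quad\text{and}\quad\inf\{k_j:k\in\operatorname{supp}(u)\}=-\infty,$$ where $k_j$ denotes the $j$-th component of $k\in\mathbb{Z}^\nu$ and $\operatorname{supp}(u)=\{k\in\mathbb{Z}^\nu:u(k)\ne0\}$.
   Context: $J_0$ is the discrete Laplacian on $\ell^2(\mathbb{Z}^\nu)$: $(J_0u)(k)=\sum_{l\in\mathbb{Z}^\nu:\|l\|_1=1}u(k+l)$, where $\|l\|_1=\sum_{j=1}^\nu|l_j|$. $D$ is multiplication by the bounded function $d$, $(Du)(k)=d(k)u(k)$. *)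

(* Defs.v *)
From HB Require Import structures.
From mathcomp Require Import all_boot all_order all_algebra.
From Stdlib Require Import Reals.
Set Implicit Arguments. Unset Strict Implicit. Unset Printing Implicit Defensive.
Import Order.TTheory GRing.Theory Num.Theory.

Definition Cx : Type := (R * R)%type.
Definition C0 : Cx := (R0, R0).
Definition Cadd (z w : Cx) : Cx := (Rplus z.1 w.1, Rplus z.2 w.2).
Definition Cmul (z w : Cx) : Cx :=
  (Rminus (Rmult z.1 w.1) (Rmult z.2 w.2), Rplus (Rmult z.1 w.2) (Rmult z.2 w.1)).
Definition Cnorm2 (z : Cx) : R := Rplus (Rmult z.1 z.1) (Rmult z.2 z.2).

Definition lattice (nu : nat) : Type := {ffun 'I_nu -> int}.

(* Note: Posz 1 = 1 and Negz 0 = -1 in int.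
   k + s * e_j, where e_j is the j-th standard unit vector. *)
Definition shift (nu : nat) (k : lattice nu) (j : 'I_nu) (s : int) : lattice nu :=
  [ffun i => GRing.add (k i) (if i == j then s else Posz 0)].

(* Discrete Laplacian: (J0 u)(k) = sum_{||l||_1 = 1} u(k+l); the vectors
   l in Z^nu with ||l||_1 = 1 are exactly +e_j and -e_j, j < nu. *)
Definition J0 (nu : nat) (u : lattice nu -> Cx) (k : lattice nu) : Cx :=
  foldr (fun j acc => Cadd (Cadd (u (shift k j (Posz 1))) (u (shift k j (Negz 0)))) acc)
        C0 (enum 'I_nu).

Definition Jop (nu : nat) (d : lattice nu -> Cx) (u : lattice nu -> Cx)
  (k : lattice nu) : Cx := Cadd (J0 u k) (Cmul (d k) (u k)).

Definition bounded_fun (nu : nat) (d : lattice nu -> Cx) : Prop :=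
  exists M : R, forall k, Rle (Cnorm2 (d k)) M.

Definition in_l2 (nu : nat) (u : lattice nu -> Cx) : Prop :=
  exists M : R, forall s : seq (lattice nu), uniq s ->
    Rle (foldr (fun k acc => Rplus (Cnorm2 (u k)) acc) R0 s) M.

(* Main.v *)
Require Import Defs.
From HB Require Import structures.
From mathcomp Require Import all_boot all_order all_algebra.
From Stdlib Require Import Reals Classical.
From mathcomp Require Import zify.
Import Order.TTheory GRing.Theory Num.Theory.
Local Open Scope ring_scope.

Lemma Cadd0l z : Cadd C0 z = z.
Proof. destruct z as [a b]; unfold Cadd, C0; simpl; f_equal; ring. Qed.
Lemma Cadd0r z : Cadd z C0 = z.
Proof. destruct z as [a b]; unfold Cadd, C0; simpl; f_equal; ring. Qed.
Lemma Cmul0r z : Cmul z C0 = C0.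
Proof. destruct z as [a b]; unfold Cmul, C0; simpl; f_equal; ring. Qed.

Lemma shiftE nu (k : lattice nu) j s i :
  shift k j s i = GRing.add (k i) (if i == j then s else Posz 0).
Proof. by rewrite /shift ffunE. Qed.

Lemma J0_single nu (u : lattice nu -> Cx) (k' : lattice nu) (j : 'I_nu) (v : Cx) :
  (forall i, i != j -> u (shift k' i (Posz 1)) = C0 /\ u (shift k' i (Negz 0)) = C0) ->
  Cadd (u (shift k' j (Posz 1))) (u (shift k' j (Negz 0))) = v ->
  J0 u k' = v.
Proof.
move=> Ho Hj; rewrite /J0.
have gen : forall s : seq 'I_nu, uniq s ->
  ((j \in s) -> foldr (fun j acc => Cadd (Cadd (u (shift k' j (Posz 1))) (u (shift k' j (Negz 0)))) acc) C0 s = v)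
  /\ ((j \notin s) -> foldr (fun j acc => Cadd (Cadd (u (shift k' j (Posz 1))) (u (shift k' j (Negz 0)))) acc) C0 s = C0).
  elim=> [|a s IH] /=; first by split.
  move/andP=> [as_ us]; have [IH1 IH2] := IH us.
  split.
  - rewrite inE; case: (eqVneq j a) => [ja | ja] /=.
    + by move=> _; subst a; rewrite -Hj IH2 ?Cadd0r.
    + have /Ho [-> ->] : a != j by rewrite eq_sym.
      by move=> js; rewrite Cadd0l Cadd0l IH1.
  - rewrite inE negb_or => /andP [ja js].
    have /Ho [-> ->] : a != j by rewrite eq_sym.
    by rewrite Cadd0l Cadd0l IH2.
have [G _] := gen _ (enum_uniq 'I_nu). by apply: G; rewrite mem_enum.
Qed.

Lemma shift_back_up nu (k : lattice nu) j :
  shift (shift k j (Posz 1)) j (Negz 0) = k.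
Proof.
apply/ffunP => i; rewrite !shiftE; case: (i == j) => //=.
- by rewrite -addrA; have -> : GRing.add (Posz 1) (Negz 0) = Posz 0 by []; rewrite addr0.
- by rewrite !addr0.
Qed.

Lemma shift_back_down nu (k : lattice nu) j :
  shift (shift k j (Negz 0)) j (Posz 1) = k.
Proof.
apply/ffunP => i; rewrite !shiftE; case: (i == j) => //=.
- by rewrite -addrA; have -> : GRing.add (Negz 0) (Posz 1) = Posz 0 by []; rewrite addr0.
- by rewrite !addr0.
Qed.

Lemma step_up nu (d u : lattice nu -> Cx) lambda
  (heig : forall k, Jop d u k = Cmul lambda (u k)) (j : 'I_nu) (B : int) (k : lattice nu) :
  (forall k2 : lattice nu, (B < k2 j)%O -> u k2 = C0) -> k j = B -> u k = C0.
Proof.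
move=> Hb Hk.
set k' := shift k j (Posz 1).
have Hk'j : k' j = B + 1 by rewrite /k' shiftE eqxx Hk.
have H := heig k'.
rewrite /Jop (Hb k') ?Cmul0r ?Cadd0r in H; last by rewrite Hk'j; lia.
rewrite -H; symmetry; apply: (@J0_single _ _ _ j).
- move=> i ij; rewrite eq_sym in ij; split; apply: Hb; rewrite shiftE (negbTE ij) addr0 Hk'j; lia.
- rewrite (Hb (shift k' j (Posz 1))); last by rewrite shiftE eqxx Hk'j; lia.
  by rewrite /k' shift_back_up Cadd0l.
Qed.

Lemma step_down nu (d u : lattice nu -> Cx) lambda
  (heig : forall k, Jop d u k = Cmul lambda (u k)) (j : 'I_nu) (B : int) (k : lattice nu) :
  (forall k2 : lattice nu, (k2 j < B)%O -> u k2 = C0) -> k j = B -> u k = C0.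
Proof.
move=> Hb Hk.
set k' := shift k j (Negz 0).
have Hk'j : k' j = B - 1 by rewrite /k' shiftE eqxx Hk.
have H := heig k'.
rewrite /Jop (Hb k') ?Cmul0r ?Cadd0r in H; last by rewrite Hk'j; lia.
rewrite -H; symmetry; apply: (@J0_single _ _ _ j).
- move=> i ij; rewrite eq_sym in ij; split; apply: Hb; rewrite shiftE (negbTE ij) addr0 Hk'j; lia.
- rewrite (Hb (shift k' j (Negz 0))); last by rewrite shiftE eqxx Hk'j; lia.
  by rewrite /k' shift_back_down Cadd0r.
Qed.


Lemma main_up nu (d u : lattice nu -> Cx) (hu0 : exists k, u k <> C0) lambda
  (heig : forall k, Jop d u k = Cmul lambda (u k)) (j : 'I_nu) (N : int) :
  exists k : lattice nu, u k <> C0 /\ (N < k j)%O.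
Proof.
apply: NNPP => Hn; case: hu0 => k0 uk0.
have Hb : forall k, u k <> C0 -> (k j <= N)%O.
  move=> k uk; rewrite leNgt; apply/negP => Hlt; apply: Hn; by exists k.
have Hall : forall n : nat, forall k, u k <> C0 -> (k j <= N - n%:Z)%O.
  elim=> [|n IH] k uk; first by rewrite subr0; apply: Hb.
  have Hz : forall k2 : lattice nu, (N - n%:Z < k2 j)%O -> u k2 = C0.
    move=> k2 lt; apply: NNPP => nz; have := IH _ nz; lia.
  have := IH _ uk; case: (eqVneq (k j) (N - n%:Z)) => [e | ne] le.
    by exfalso; apply: uk; exact: (@step_up _ _ _ _ heig _ _ _ Hz e).
  lia.
have := Hall (absz (N - k0 j)).+1 k0 uk0; lia.
Qed.

Lemma main_down nu (d u : lattice nu -> Cx) (hu0 : exists k, u k <> C0) lambda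
  (heig : forall k, Jop d u k = Cmul lambda (u k)) (j : 'I_nu) (N : int) :
  exists k : lattice nu, u k <> C0 /\ (k j < N)%O.
Proof.
apply: NNPP => Hn; case: hu0 => k0 uk0.
have Hb : forall k, u k <> C0 -> (N <= k j)%O.
  move=> k uk; rewrite leNgt; apply/negP => Hlt; apply: Hn; by exists k.
have Hall : forall n : nat, forall k, u k <> C0 -> (N + n%:Z <= k j)%O.
  elim=> [|n IH] k uk; first by rewrite addr0; apply: Hb.
  have Hz : forall k2 : lattice nu, (k2 j < N + n%:Z)%O -> u k2 = C0.
    move=> k2 lt; apply: NNPP => nz; have := IH _ nz; lia.
  have := IH _ uk; case: (eqVneq (k j) (N + n%:Z)) => [e | ne] le.
    by exfalso; apply: uk; exact: (@step_down _ _ _ _ heig _ _ _ Hz e).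
  lia.
have := Hall (absz (N - k0 j)).+1 k0 uk0; lia.
Qed.

Local Close Scope ring_scope.
Theorem mainTheorem4 (nu : nat) (hnu : (0 < nu)%N)
  (d : lattice nu -> Cx) (hd : bounded_fun d)
  (u : lattice nu -> Cx) (hu : in_l2 u) (hu0 : exists k, u k <> C0)
  (lambda : Cx) (heig : forall k, Jop d u k = Cmul lambda (u k)) :
  forall j : 'I_nu,
    (forall N : int, exists k : lattice nu, u k <> C0 /\ (N < k j)%O) /\
    (forall N : int, exists k : lattice nu, u k <> C0 /\ (k j < N)%O).
Proof.
move=> j; split => N; [exact: (@main_up _ _ _ hu0 _ heig) | exact: (@main_down _ _ _ hu0 _ heig)].
Qed.
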